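(* Let $n \geq 5$ and let $T_0$ be a forest of $K_n$ that is not $6$-star-like. Then at least $e^{-4} n^{n-2}$ of the spanning trees $T$ of $K_n$ avoid $T_0$ (share no edge with $T_0$); in particular $|\mathcal{T}_n[T_0;\emptyset]| \geq e^{-4} n^{n-2}$.
   Context: A forest $T$ of $K_n$ is $d$-star-like if it has an edge that is incident to (shares an endpoint with) at least $(n-1)/d$ other edges of $T$. $\mathcal{T}_n$ is the set of labelled spanning trees of $K_n$, identified with edge sets, and $\mathcal{T}_n[T_0;\emptyset]=\{T\in\mathcal{T}_n : T\cap T_0=\emptyset\}$. *)

(* Defs.v *)
From mathcomp Require Import all_boot.
From Stdlib Require Import Reals.

Set Implicit Arguments.
Unset Strict Implicit.
Unset Printing Implicit Defensive.

(* Vertices of K_n are 'I_n; an edge of K_n is a 2-element subset of 'I_n;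
   an edge set (subgraph of K_n) is a set of such edges. *)
Definition edge_set (n : nat) := {set {set 'I_n}}.

Definition is_edge_set n (F : edge_set n) : Prop :=
  forall e, e \in F -> #|e| = 2.

Definition adj n (F : edge_set n) : rel 'I_n :=
  fun x y => (x != y) && ([set x; y] \in F).

Definition has_cycle n (F : edge_set n) : Prop :=
  exists s : seq 'I_n, 3 <= size s /\ ucycle (adj F) s.

Definition forest n (F : edge_set n) : Prop :=
  is_edge_set F /\ ~ has_cycle F.

Definition connected_es n (F : edge_set n) : Prop :=
  forall x y : 'I_n, connect (adj F) x y.

Definition spanning_tree n (T : edge_set n) : Prop :=
  forest T /\ connected_es T.

Definition star_like n (d : nat) (T : edge_set n) : Prop :=
  exists2 e, e \in T &
    (((INR n - 1) / INR d)%R <=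
       INR #|[set f in T | (f != e) && ~~ [disjoint e & f]]|)%R.

(* Main.v *)
Require Import Defs.
From mathcomp Require Import all_boot.
From Stdlib Require Import Reals Lra Lia.
From mathcomp Require Import zify.

Set Implicit Arguments.
Unset Strict Implicit.
Unset Printing Implicit Defensive.


Section Gen.
Variable n : nat.
Implicit Types (F E : edge_set n).

Lemma adj_sym F : symmetric (adj F).
Proof. by move=> x y; rewrite /adj eq_sym setUC. Qed.

Lemma connect_symF F x y : connect (adj F) x y = connect (adj F) y x.
Proof. exact: (sym_connect_sym (adj_sym F)). Qed.

Lemma adj_sub F E : F \subset E -> forall x y, adj F x y -> adj E x y.
Proof. by move=> sFE x y; rewrite /adj => /andP[-> /(subsetP sFE) ->]. Qed.

Lemma connect_mono F E : F \subset E -> forall x y, connect (adj F) x y -> connect (adj E) x y.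
Proof. move=> sFE; apply: connect_sub => x y /(adj_sub sFE); exact: connect1. Qed.

Lemma set2_eq (a b c d : 'I_n) : a != b -> [set a; b] = [set c; d] ->
  (a = c /\ b = d) \/ (a = d /\ b = c).
Proof.
move=> ab E.
have : a \in [set c; d] by rewrite -E !inE eqxx.
have : b \in [set c; d] by rewrite -E !inE eqxx orbT.
rewrite !inE => /orP[] /eqP hb /orP[] /eqP ha; subst.
- by rewrite eqxx in ab.
- by right.
- by left.
- by rewrite eqxx in ab.
Qed.

Lemma next_neq_prev (s : seq 'I_n) x : uniq s -> 3 <= size s -> x \in s ->
  next s x != prev s x.
Proof.
move=> us ss xs; apply/eqP => E.
have : next s (next s x) = x by rewrite E next_prev.
case: (rot_to xs) => i s' Hr.
have us' : uniq (x :: s') by rewrite -Hr rot_uniq.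
have ss' : 3 <= size (x :: s') by rewrite -Hr size_rot.
rewrite -!(next_rot i us) Hr.
case: s' us' ss' {Hr} => [|y [|z r]] //= us' _.
move: us'; rewrite !inE !negb_or => /andP[/andP[xy /andP[xz _]] /andP[/andP[yz _] _]].
rewrite /next /= eqxx /=.
rewrite eq_sym (negbTE xy) eqxx => /eqP; rewrite eq_sym; by rewrite (negbTE xz).
Qed.


Definition EdgesOf (P : {ffun 'I_n -> 'I_n}) : edge_set n :=
  [set [set v; P v] | v in [set v | P v != v]].

Lemma EdgesP (P : {ffun 'I_n -> 'I_n}) (e : {set 'I_n}) : reflect (exists2 v, P v != v & e = [set v; P v]) (e \in EdgesOf P).
Proof.
apply: (iffP imsetP) => [[v] | [v]]; rewrite ?inE => H1 H2; by exists v; rewrite ?inE.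
Qed.

Lemma par_of_adj (P : {ffun 'I_n -> 'I_n}) (h : 'I_n -> nat) :
  (forall v, P v != v -> h (P v) < h v) ->
  forall a b, adj (EdgesOf P) a b -> h b <= h a -> P a = b.
Proof.
move=> hP a b; rewrite /adj => /andP[ab /EdgesP[v Pv E]] hab.
case: (set2_eq ab E) => [[<- <-] //|[Ea Eb]].
subst; have := hP _ Pv; rewrite ltnNge hab //.
Qed.

Lemma nocycle (P : {ffun 'I_n -> 'I_n}) (h : 'I_n -> nat) :
  (forall v, P v != v -> h (P v) < h v) -> ~ has_cycle (EdgesOf P).
Proof.
move=> hP [s [ss /andP[cs us]]].
case: s ss cs us => [//|x0 s1] ss cs us.
have x0s : x0 \in x0 :: s1 by rewrite inE eqxx.
case: (arg_maxnP h (P := fun i => i \in x0 :: s1) x0s) => x xs xmax.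
have h1 : P x = next (x0 :: s1) x.
  apply: (par_of_adj hP); first exact: next_cycle.
  by apply: xmax; rewrite mem_next.
have h2 : P x = prev (x0 :: s1) x.
  apply: (par_of_adj hP); first by rewrite adj_sym; exact: prev_cycle.
  by apply: xmax; rewrite mem_prev.
by have := next_neq_prev us ss xs; rewrite -h1 -h2 eqxx.
Qed.

Lemma path_cycle F E a b : F \subset E -> a != b -> connect (adj F) a b ->
  [set a; b] \notin F -> [set a; b] \in E -> has_cycle E.
Proof.
move=> sFE ab /connectP[p pth lst] nF abE; subst b.
move: ab nF abE; case: (shortenP pth) => p' pth' up' _ {pth} ab nF abE.
exists (a :: p'); split.
  case: p' pth' up' ab nF {abE} => [|c [|d r]] //=; first by rewrite eqxx.
  by rewrite andbT => /andP[_] => ->.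
rewrite /ucycle up' andbT /cycle rcons_path (sub_path (adj_sub sFE) pth') /=.
by rewrite /adj eq_sym ab setUC.
Qed.

End Gen.


Section UF.
Variable n : nat.
Variable T0 : edge_set n.
Hypothesis fT0 : forest T0.

Lemma uf k (F : edge_set n) : #|F| = k -> F \subset T0 ->
  exists rt : 'I_n -> 'I_n, [/\ (forall v, rt (rt v) = rt v),
    (forall x y, rt x = rt y -> connect (adj F) x y) &
    k + #|[set v | rt v == v]| <= n].
Proof.
elim: k F => [|k IH] F cF sF.
  exists (fun v => v); split => //.
    by move=> x y ->; exact: connect0.
  have -> : [set v : 'I_n | v == v] = setT by apply/setP => v; rewrite !inE eqxx.
  by rewrite cardsT card_ord.
have /card_gt0P[e eF] : 0 < #|F| by rewrite cF.
have cF' : #|F :\ e| = k by move: cF; rewrite (cardsD1 e) eF add1n => -[].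
have sF' : F :\ e \subset T0 by apply: subset_trans sF; exact: subD1set.
have [rt [rtK rtC rtN]] := IH _ cF' sF'.
have eT : e \in T0 by apply: (subsetP sF).
have /cards2P[a [b [ab Ee]]] : #|e| == 2 by rewrite fT0.1.
subst e.
have [Hab | Hab] := eqVneq (rt a) (rt b).
  exfalso; apply: fT0.2; apply: (path_cycle sF' ab (rtC _ _ Hab)) => //.
  by rewrite !inE eqxx.
have sFF : F :\ [set a; b] \subset F by exact: subD1set.
pose rt' v := if rt v == rt a then rt b else rt v.
have rbK : rt (rt b) == rt a = false by rewrite rtK eq_sym (negbTE Hab).
exists rt'; split.
- move=> v; rewrite /rt'; have [Hv|Hv] := eqVneq (rt v) (rt a).
    by rewrite rbK.
  by rewrite rtK (negbTE Hv).
- have adjab : connect (adj F) a b.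
    by apply: connect1; rewrite /adj ab eF.
  have lift x y : connect (adj (F :\ [set a; b])) x y -> connect (adj F) x y.
    exact: connect_mono.
  move=> x y; rewrite /rt'.
  have [Hx|Hx] := eqVneq (rt x) (rt a); have [Hy|Hy] := eqVneq (rt y) (rt a).
  + by move=> _; apply: lift; apply: rtC; rewrite Hx Hy.
  + move=> Hb; apply: (connect_trans (y := a)).
      by apply: lift; apply: rtC; rewrite Hx.
    apply: (connect_trans adjab); rewrite connect_symF; apply: lift; apply: rtC.
    by rewrite Hb.
  + move=> Hb; apply: (connect_trans (y := b)).
      by apply: lift; apply: rtC; rewrite Hb.
    rewrite connect_symF; apply: (connect_trans (y := a)); last exact: adjab.
    by apply: lift; apply: rtC; rewrite Hy.
  + by move=> E; apply: lift; apply: rtC.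
- have -> : [set v | rt' v == v] = [set v | rt v == v] :\ rt a.
    apply/setP => v; rewrite !inE /rt'.
    have [Hv|Hv] := eqVneq v (rt a).
      by subst v; rewrite rtK eqxx /= eq_sym (negbTE Hab).
    rewrite /=; case: ifP => Hva /=.
      have -> : (rt v == v) = false.
        by apply/negbTE; apply: contra Hv => /eqP Ev; rewrite -Ev (eqP Hva).
      apply/negbTE/eqP => Hb; move: Hva; rewrite -Hb rtK => /eqP Hb'.
      by move: Hab; rewrite Hb' eqxx.
    by [].
  have := cardsD1 (rt a) [set v | rt v == v]; rewrite !inE rtK eqxx /=.
  by move=> E; move: rtN; rewrite E addSn addnS.
Qed.

Lemma forest_card : 0 < n -> #|T0| < n.
Proof.
move=> n0.
have [rt [rtK _ H]] := uf (erefl #|T0|) (subxx T0).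
have : 0 < #|[set v | rt v == v]|.
  by apply/card_gt0P; exists (rt (Ordinal n0)); rewrite inE rtK.
lia.
Qed.

End UF.


Section Main.
Variable n : nat.
Variable T0 : edge_set n.

Definition nbb (w v : 'I_n) := [set w; v] \in T0.

Record st := St { rt : 'I_n -> 'I_n ; par : {ffun 'I_n -> 'I_n} ; hh : 'I_n -> nat }.

Definition gd (r : 'I_n -> 'I_n) w u := (r u != w) && ~~ nbb w u.

Definition moves S : {set 'I_n * 'I_n} :=
  [set m | (rt S m.1 == m.1) && gd (rt S) m.1 m.2].

Definition step S (m : 'I_n * 'I_n) :=
  St (fun v => if rt S v == m.1 then rt S m.2 else rt S v)
     [ffun v => if v == m.1 then m.2 else par S v]
     (fun v => if rt S v == m.1 then hh S v + hh S m.2 + 1 else hh S v).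

Definition valid S := (forall v, rt S (rt S v) = rt S v) /\
  (forall v, (par S v == v) = (rt S v == v)) /\
  (forall v, rt S (par S v) = rt S v) /\
  (forall v, par S v != v -> hh S (par S v) < hh S v) /\
  (forall v, connect (adj (EdgesOf (par S))) v (rt S v)) /\
  (forall v, par S v != v -> [set v; par S v] \notin T0).

Fixpoint O k S : {set {ffun 'I_n -> 'I_n}} :=
  if k is k'.+1 then \bigcup_(m in moves S) O k' (step S m) else [set par S].

Definition nroots S := #|[set v | rt S v == v]|.

Section StepS.
Variables (S : st) (m : 'I_n * 'I_n).
Hypothesis vS : valid S.
Hypothesis mM : m \in moves S.

Local Notation w := m.1.
Local Notation u := m.2.

Lemma mv_facts : [/\ rt S w = w, rt S u != w, u != w & ~~ nbb w u].
Proof.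
move: mM; rewrite inE /gd => /and3P[/eqP H1 H2 H3]; split => //.
by apply: contra H2 => /eqP ->; rewrite H1.
Qed.

Lemma step_roots v : (rt (step S m) v == v) = (rt S v == v) && (v != w).
Proof.
case: vS => rtK [parR [rtP [hP [cP gP]]]]; case: mv_facts => rw ru uw nw.
rewrite /step /=.
have [Hv|Hv] := eqVneq v w.
  rewrite Hv rw eqxx /=; exact/negbTE.
rewrite andbT; have [Hvw|Hvw] := eqVneq (rt S v) w => //.
have -> : (rt S v == v) = false by apply/negbTE; rewrite Hvw eq_sym.
apply/negbTE/eqP => E; move: Hvw; rewrite -E rtK => /eqP; exact/negP.
Qed.

Lemma step_nroots : nroots (step S m) = (nroots S).-1.
Proof.
case: mv_facts => rw _ _ _.
rewrite /nroots (cardsD1 w [set v | rt S v == v]) inE rw eqxx add1n /=.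
apply: eq_card => v; rewrite !inE step_roots andbC //.
Qed.

Lemma edges_step : EdgesOf (par S) \subset EdgesOf (par (step S m)).
Proof.
case: vS => rtK [parR [rtP [hP [cP gP]]]]; case: mv_facts => rw ru uw nw.
apply/subsetP => e /EdgesP[v pv ->]; apply/EdgesP; exists v; rewrite /step /= ffunE.
  have -> : (v == w) = false.
    by apply/negbTE; apply: contra pv => /eqP ->; rewrite parR rw.
  by [].
have -> : (v == w) = false.
  by apply/negbTE; apply: contra pv => /eqP ->; rewrite parR rw.
by [].
Qed.

Lemma step_valid : valid (step S m).
Proof.
have vS' := vS; case: vS' => rtK [parR [rtP [hP [cP gP]]]]; case: mv_facts => rw ru uw nw.
have ruK : (rt S (rt S u) == w) = false by rewrite rtK; exact/negbTE.
split; [|split; [|split; [|split; [|split]]]]; rewrite /step /= ?ffunE.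
- move=> v; have [Hv|Hv] := eqVneq (rt S v) w; first by rewrite ruK rtK.
  by rewrite rtK (negbTE Hv).
- move=> v; rewrite ffunE; have [Hv|Hv] := eqVneq v w.
    subst v; rewrite rw eqxx (negbTE uw); apply/esym/negbTE; exact: ru.
  rewrite parR; have [Hvw|Hvw] := eqVneq (rt S v) w => //.
  have -> : (rt S v == v) = false by apply/negbTE; rewrite Hvw eq_sym.
  apply/esym/negbTE/eqP => E; move: Hvw; rewrite -E rtK => /eqP; exact/negP.
- move=> v; rewrite ffunE; have [Hv|Hv] := eqVneq v w.
    subst v; rewrite rw eqxx (negbTE ru) //.
  by rewrite rtP.
- move=> v; rewrite ffunE; have [Hv|Hv] := eqVneq v w.
    subst v; rewrite rw eqxx (negbTE ru) => _; lia.
  move=> pv; rewrite rtP; have := hP _ pv; case: ifP => _; lia.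
- move=> v.
  have lift x y : connect (adj (EdgesOf (par S))) x y ->
      connect (adj (EdgesOf (par (step S m)))) x y.
    exact/connect_mono/edges_step.
  have [Hv|Hv] := eqVneq (rt S v) w; last by apply: lift.
  apply: (connect_trans (y := w)); first by rewrite -{2}Hv; apply: lift.
  apply: (connect_trans (y := u)); last by apply: lift.
  apply: connect1; rewrite /adj eq_sym uw /=; apply/EdgesP; exists w; rewrite /step /= ffunE eqxx //.
- move=> v; rewrite ffunE; have [Hv|Hv] := eqVneq v w; last exact: gP.
  by subst v => _.
Qed.

End StepS.

Lemma final k : forall S P, valid S -> nroots S = k.+1 -> P \in O k S ->
  exists S', [/\ valid S', par S' = P, nroots S' = 1,
    (forall v, par S v != v -> P v = par S v) &
    (forall v, rt S' v == v -> rt S v == v)].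
Proof.
elim: k => [|k IH] S P vS nS /=.
  by rewrite inE => /eqP ->; exists S.
case/bigcupP => m mM PO.
have nSm : nroots (step S m) = k.+1 by rewrite step_nroots // nS.
have [S' [vS' pS' nS' eS' rS']] := IH _ _ (step_valid vS mM) nSm PO.
exists S'; split => //.
  move=> v pv; have [rw _ _ _] := mv_facts mM.
  have vw : v != m.1.
    by apply: contra pv => /eqP ->; case: vS => _ [parR _]; rewrite parR rw.
  rewrite eS' /step /= ffunE (negbTE vw) //.
by move=> v /rS'; rewrite step_roots // => /andP[].
Qed.

End Main.


Section Key.
Variable n : nat.
Variable T0 : edge_set n.
Local Notation nbb := (nbb T0).
Local Notation gd := (gd T0).

Definition tt (r : 'I_n -> 'I_n) w := \sum_(u : 'I_n) (r u == w : nat).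
Definition xx (r : 'I_n -> 'I_n) w := \sum_(z : 'I_n) (nbb w z && (r z != w) : nat).
Definition gg (r : 'I_n -> 'I_n) w := \sum_(u : 'I_n) (gd r w u : nat).
Definition yy (r : 'I_n -> 'I_n) w u := \sum_(z : 'I_n) (nbb (r u) z && (r z == w) : nat).
Definition dg w := \sum_(z : 'I_n) (nbb w z : nat).
Definition bb (r : 'I_n -> 'I_n) z u := nbb (r u) z && gd r (r z) u.

Lemma sum1n : \sum_(u : 'I_n) 1 = n.
Proof. by rewrite sum1_card card_ord. Qed.

Lemma sum_cond_const (P : pred 'I_n) c : \sum_(u | P u) c = (\sum_u (P u : nat)) * c.
Proof.
rewrite big_mkcond big_distrl; apply: eq_bigr => u _ /=; case: (P u) => //=.
by rewrite mul1n.
Qed.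

Variable r : 'I_n -> 'I_n.
Hypothesis rK : forall v, r (r v) = r v.

Lemma sum_root_ind v (F : 'I_n -> nat) :
  \sum_(w | r w == w) ((r v == w) * F w) = F (r v).
Proof.
rewrite (bigD1 (r v)) /=; last by rewrite rK.
rewrite eqxx mul1n big1 ?addn0 // => w /andP[_ wv].
by rewrite eq_sym (negbTE wv).
Qed.

Lemma F1 w : gg r w + xx r w + tt r w = n.
Proof.
rewrite /gg /xx /tt -!big_split /= -[X in _ = X]sum1n; apply: eq_bigr => u _.
rewrite /gd; case: (eqVneq (r u) w) => [E|ruw] /=; first by rewrite andbF.
by rewrite andbT; case: (nbb w u).
Qed.

Lemma F2 : \sum_(w | r w == w) tt r w = n.
Proof.
rewrite /tt exchange_big /= -[X in _ = X]sum1n; apply: eq_bigr => u _.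
rewrite -(sum_root_ind u (fun _ => 1)).
by apply: eq_bigr => w _; rewrite muln1.
Qed.

Lemma Yeq : \sum_(w | r w == w) \sum_(u | gd r w u) yy r w u =
  \sum_(u : 'I_n) \sum_(z : 'I_n) (bb r z u : nat).
Proof.
have E w : \sum_(u | gd r w u) yy r w u =
    \sum_u \sum_z ((r z == w) * (bb r z u : nat)).
  rewrite big_mkcond; apply: eq_bigr => u _ /=; rewrite /yy /bb.
  case: ifP => g.
    apply: eq_bigr => z _; case: (eqVneq (r z) w) => [Ez|Ez]; last by rewrite andbF.
    by rewrite Ez g andbT mul1n.
  rewrite big1 // => z _; case: (eqVneq (r z) w) => [Ez|Ez] //.
  by rewrite Ez g andbF.
rewrite (eq_bigr _ (fun w _ => E w)) exchange_big /=; apply: eq_bigr => u _.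
rewrite exchange_big /=; apply: eq_bigr => z _.
exact: sum_root_ind z (fun _ => (bb r z u : nat)).
Qed.

Variable D : nat.
Hypothesis hD : forall w, dg w <= D.

Lemma xD w : xx r w <= D.
Proof.
apply: leq_trans (hD w); apply: leq_sum => z _; by case: (nbb w z); case: (r z != w).
Qed.

Lemma F3 : \sum_(w | r w == w) xx r w * tt r w <=
  \sum_(w | r w == w) \sum_(u | gd r w u) yy r w u + D * \sum_(w | r w == w) xx r w.
Proof.
rewrite Yeq.
have E w : xx r w * tt r w = \sum_z \sum_u ((nbb w z && (r z != w)) * (r u == w)).
  by rewrite /xx /tt big_distrl; apply: eq_bigr => z _; rewrite big_distrr.
rewrite (eq_bigr _ (fun w _ => E w)).
apply: (@leq_trans ((\sum_(w | r w == w) \sum_z \sum_u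
   ((r u == w) * (bb r z u : nat))) + \sum_(w | r w == w) \sum_z \sum_u
   ((nbb w z && (r z != w)) * (nbb (r z) u)))).
  rewrite -big_split; apply: leq_sum => w _; rewrite -big_split; apply: leq_sum => z _.
  rewrite -big_split; apply: leq_sum => u _.
  case: (eqVneq (r u) w) => [<-|ruw]; last by rewrite muln0.
  rewrite muln1 mul1n /bb /gd eq_sym.
  by case: (nbb (r u) z); case: (r u == r z); case: (nbb (r z) u).
rewrite leq_add //.
  rewrite exchange_big /=; apply: eq_leq.
  rewrite [RHS]exchange_big /=.
  apply: eq_bigr => z _; rewrite exchange_big /=; apply: eq_bigr => u _.
  exact: sum_root_ind u (fun _ => (bb r z u : nat)).
rewrite big_distrr /=; apply: leq_sum => w _.
rewrite /xx big_distrr /=; apply: leq_sum => z _.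
rewrite -big_distrr /= mulnC; apply: leq_mul => //.
exact: hD.
Qed.

Hypothesis h4 : 4 * D <= n.

Lemma key : n * \sum_(w | r w == w) (n - tt r w) <=
  \sum_(w | r w == w) \sum_(u | gd r w u) (n + 2 * xx r w + 2 * yy r w u).
Proof.
have E1 w : \sum_(u | gd r w u) (n + 2 * xx r w + 2 * yy r w u) =
    gg r w * (n + 2 * xx r w) + 2 * \sum_(u | gd r w u) yy r w u.
  by rewrite big_split /= sum_cond_const -big_distrr.
rewrite (eq_bigr _ (fun w _ => E1 w)) big_split /= -big_distrr /=.
have E2 w : n - tt r w = gg r w + xx r w by have := F1 w; lia.
rewrite (eq_bigr _ (fun w _ => E2 w)).
have P w : n * (gg r w + xx r w) + 2 * D * xx r w <=
    gg r w * (n + 2 * xx r w) + 2 * (xx r w * tt r w).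
  have := F1 w; have := xD w; set g := gg r w; set x := xx r w; set t := tt r w.
  move=> hx hn.
  have : x * (x + 2 * D) <= x * (g + t) by apply: leq_mul => //; lia.
  nia.
have S1 : \sum_(w | r w == w) (n * (gg r w + xx r w) + 2 * D * xx r w) <=
    \sum_(w | r w == w) (gg r w * (n + 2 * xx r w) + 2 * (xx r w * tt r w)).
  by apply: leq_sum => w _; exact: P w.
rewrite big_split /= big_split /= -!big_distrr /= in S1.
have S3 := F3.
set Y := \sum_(w | r w == w) \sum_(u | gd r w u) yy r w u in S3 *.
set X := \sum_(w | r w == w) xx r w in S1 S3.
set A := \sum_(w | r w == w) xx r w * tt r w in S1 S3.
set G := \sum_(i | r i == i) (gg r i + xx r i) in S1 *.
set L := \sum_(i | r i == i) gg r i * (n + 2 * xx r i) in S1 *.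
rewrite -mulnA in S1.
lia.
Qed.

End Key.


Section Count.
Variable n : nat.
Variable T0 : edge_set n.
Local Notation nbb := (nbb T0).
Local Notation gd := (gd T0).
Local Notation xx := (xx T0).
Local Notation yy := (yy T0).
Local Notation moves := (moves T0).
Local Notation step := (@step n).
Local Notation valid := (valid T0).
Local Notation O := (O T0).

Definition Phi S := \sum_(w | rt S w == w) xx (rt S) w.

Lemma phi_step S m : valid S -> m \in moves S ->
  Phi (step S m) + xx (rt S) m.1 + yy (rt S) m.1 m.2 <= Phi S.
Proof.
move=> vS mM; have [rw ru uw nw] := mv_facts mM.
have [rtK _] := vS.
have r'E v : rt (step S m) v = if rt S v == m.1 then rt S m.2 else rt S v by [].
rewrite /Phi (eq_bigl (fun w => (rt S w == w) && (w != m.1))); last first.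
  by move=> w; exact: (step_roots vS mM).
rewrite [in X in _ <= X](bigD1 m.1) /=; last by rewrite rw.
set rho := rt S m.2.
have rhoP : (rt S rho == rho) && (rho != m.1) by rewrite rtK eqxx ru.
rewrite (bigD1 rho rhoP) [in X in _ <= X](bigD1 rho rhoP) /=.
have h1 : xx (rt (step S m)) rho + yy (rt S) m.1 m.2 <= xx (rt S) rho.
  rewrite /xx /yy -big_split; apply: leq_sum => z _; rewrite r'E -/rho.
  case: (eqVneq (rt S z) m.1) => [E|E].
    have ru2 : m.1 != rho by rewrite eq_sym.
    by rewrite eqxx E ru2; case: (nbb rho z).
  by rewrite andbF; case: (nbb rho z && _).
have h2 : \sum_(i | ((rt S i == i) && (i != m.1)) && (i != rho)) xx (rt (step S m)) i <=
          \sum_(i | ((rt S i == i) && (i != m.1)) && (i != rho)) xx (rt S) i.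
  apply: leq_sum => w /andP[/andP[_ w1] wr]; rewrite /xx; apply: leq_sum => z _.
  rewrite r'E; case: (eqVneq (rt S z) m.1) => [E|E] //.
  by rewrite eq_sym (negbTE wr) E eq_sym (negbTE w1).
have fin4 (a' s' x y a s : nat) : a' + y <= a -> s' <= s -> a' + s' + x + y <= x + (a + s).
  lia.
exact: fin4 h1 h2.
Qed.

Lemma card_sumI (T : finType) (A : {set T}) : #|A| = \sum_x (x \in A : nat).
Proof. by rewrite -sum1_card big_mkcond; apply: eq_bigr => P _; case: (P \in A). Qed.

Lemma cardE (A : {set {ffun 'I_n -> 'I_n}}) : #|A| = \sum_P (P \in A : nat).
Proof. by rewrite -sum1_card big_mkcond; apply: eq_bigr => P _; case: (P \in A). Qed.

Lemma dcount k S : valid S -> nroots S = k.+2 ->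
  \sum_(m in moves S) #|O k (step S m)| <= k.+1 * #|O k.+1 S|.
Proof.
move=> vS nS.
set U := O k.+1 S.
have sub m : m \in moves S -> O k (step S m) \subset U.
  by move=> mM; rewrite /U /=; exact: (bigcup_sup m mM).
rewrite (eq_bigr _ (fun m _ => cardE (O k (step S m)))) exchange_big /=.
rewrite [X in _ <= _ * X]cardE big_distrr /=; apply: leq_sum => P _.
case PU: (P \in U); last first.
  rewrite big1 // => m mM; case PO: (P \in O k (step S m)) => //.
  by move: PU; rewrite (subsetP (sub m mM) _ PO).
rewrite muln1.
have [S' [vS' pS' nS' eS' rS']] := final vS nS PU.
have [r Hr] : exists r, [set v | rt S' v == v] = [set r] by apply/cards1P/eqP.
have rr : rt S' r == r by have := set11 r; rewrite -Hr inE.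
have Pr : P r = r by rewrite -pS'; case: vS' => _ [parR _]; apply/eqP; rewrite parR.
have rS : rt S r == r by exact: rS'.
have -> : \sum_(m in moves S) (P \in O k (step S m) : nat) =
    #|[set m in moves S | P \in O k (step S m)]|.
  rewrite card_sumI big_mkcond /=; apply: eq_bigr => m _; rewrite !inE.
  by case: (_ && gd _ _ _).
set A := [set m in moves S | P \in O k (step S m)].
have injA : {in A &, injective (fun m : 'I_n * 'I_n => m.1)}.
  have key m : m \in A -> P m.1 = m.2.
    rewrite inE => /andP[mM PO].
    have nSm : nroots (step S m) = k.+1 by rewrite (step_nroots vS mM) nS.
    have [S2 [_ _ _ e2 _]] := final (step_valid vS mM) nSm PO.
    have [_ _ uw _] := mv_facts mM.
    by rewrite e2 /step /= ffunE eqxx.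
  move=> [a b] [c d] mA mB /= E; subst c.
  by have := key _ mA; have := key _ mB => /= -> ->.
rewrite -(card_in_imset injA).
apply: (@leq_trans #|[set v | rt S v == v] :\ r|).
  apply: subset_leq_card; apply/subsetP => w /imsetP[m mA ->].
  have := mA; rewrite inE => /andP[mM PO].
  have [rw _ uw _] := mv_facts mM.
  rewrite !inE rw eqxx andbT; apply/eqP => E.
  have nSm : nroots (step S m) = k.+1 by rewrite (step_nroots vS mM) nS.
  have [S2 [_ _ _ e2 _]] := final (step_valid vS mM) nSm PO.
  have := e2 m.1; rewrite /step /= ffunE eqxx => /(_ uw); rewrite E Pr => E2.
  by move: uw; rewrite -E2 E eqxx.
have := cardsD1 r [set v | rt S v == v]; rewrite inE rS /= -/(nroots S) nS.
lia.
Qed.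

End Count.


Lemma leINR (a b : nat) : a <= b -> (INR a <= INR b)%R.
Proof. by move=> h; apply: le_INR; apply/leP. Qed.

Lemma exp_le (a b : R) : (a <= b)%R -> (exp a <= exp b)%R.
Proof.
move=> h; case: (Rle_lt_or_eq_dec _ _ h) => [lt|->]; last exact: Rle_refl.
by left; apply: exp_increasing.
Qed.

Lemma sum_le_R (I : finType) (M : pred I) (f g : I -> nat) (c : R) :
  (forall m, M m -> (c * INR (f m) <= INR (g m))%R) ->
  (c * INR (\sum_(m | M m) f m) <= INR (\sum_(m | M m) g m))%R.
Proof.
move=> H.
apply: (big_ind2 (fun a b => (c * INR a <= INR b)%R)) => //.
- by rewrite /=; lra.
- by move=> a b a' b' h1 h2; rewrite !plus_INR; lra.
Qed.

Section Real.
Variable n : nat.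
Variable T0 : edge_set n.
Local Notation moves := (moves T0).
Local Notation step := (@step n).
Local Notation valid := (valid T0).
Local Notation O := (O T0).
Local Notation Phi := (Phi T0).
Variable D : nat.
Hypothesis hD : forall w, dg T0 w <= D.
Hypothesis h4 : 4 * D <= n.
Hypothesis n0 : 0 < n.

Lemma mainR k : forall S, valid S -> nroots S = k.+1 ->
  (INR n ^ k * exp (- (2 * INR (Phi S) / INR n)) <= INR #|O k S|)%R.
Proof.
have N0 : (0 < INR n)%R by apply: lt_0_INR; apply/ltP.
elim: k => [|k IH] S vS nS.
  rewrite /= cards1 /= Rmult_1_l -exp_0; apply: exp_le.
  have := pos_INR (Phi S); move=> h.
  have : (0 <= 2 * INR (Phi S) / INR n)%R.
    by apply: Rmult_le_pos; [lra | left; apply: Rinv_0_lt_compat].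
  lra.
set N := INR n in N0 *.
set e := exp (- (2 * INR (Phi S) / N)).
have e0 : (0 < e)%R by apply: exp_pos.
have Nk0 : (0 < N ^ k)%R by apply: pow_lt.
set c := (N ^ k * e / N)%R.
have per m : m \in moves S ->
    (c * INR (n + 2 * xx T0 (rt S) m.1 + 2 * yy T0 (rt S) m.1 m.2) <= INR #|O k (step S m)|)%R.
  move=> mM.
  have vSm := step_valid vS mM.
  have nSm : nroots (step S m) = k.+1 by rewrite (step_nroots vS mM) nS.
  apply: Rle_trans (IH _ vSm nSm).
  have hp := phi_step vS mM.
  have hp' := leINR hp; rewrite !plus_INR in hp'.
  set A := INR (Phi (step S m)) in hp' *.
  set B := INR (Phi S) in hp' *.
  set X := INR (xx T0 (rt S) m.1) in hp' *.
  set Y := INR (yy T0 (rt S) m.1 m.2) in hp' *.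
  rewrite !plus_INR -/X -/Y -/N.
  have -> : (N + (X + (X + INR 0)) + (Y + (Y + INR 0)) = N + 2 * X + 2 * Y)%R.
    by rewrite /=; lra.
  have h1 : (- (2 * B / N) + 2 * (X + Y) / N <= - (2 * A / N))%R.
    have -> : (- (2 * A / N) = - (2 * B / N) + 2 * (X + Y) / N + 2 * (B - A - X - Y) / N)%R.
      by field; lra.
    have : (0 <= 2 * (B - A - X - Y) / N)%R.
      by apply: Rmult_le_pos; [lra | left; apply: Rinv_0_lt_compat].
    lra.
  have h2 := exp_le h1; rewrite exp_plus -/e in h2.
  have h3 := exp_ineq1_le (2 * (X + Y) / N).
  have h4' : (c * (N + 2 * X + 2 * Y) = N ^ k * (e * (1 + 2 * (X + Y) / N)))%R.
    by rewrite /c; field; lra.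
  rewrite h4'; apply: Rmult_le_compat_l; first lra.
  apply: Rle_trans h2; apply: Rmult_le_compat_l; lra.
have S1 := sum_le_R per.
have S2 := dcount vS nS.
have K := key (vS.1) hD h4.
rewrite pair_big_dep /= in K.
have E : \sum_(w | rt S w == w) (n - tt (rt S) w) = k.+1 * n.
  have F := F2 (vS.1).
  have : \sum_(w | rt S w == w) (n - tt (rt S) w) + \sum_(w | rt S w == w) tt (rt S) w =
      \sum_(w | rt S w == w) n.
    rewrite -big_split /=; apply: eq_bigr => w _; rewrite subnK //.
    have := F1 T0 (rt S) w; lia.
  rewrite F sum_nat_const.
  have -> : #|[pred w | rt S w == w]| = k.+2.
    by rewrite -nS /nroots; apply: eq_card => w; rewrite inE.
  lia.
rewrite E in K.
have K' := leINR K.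
have S2' := leINR S2.
have Ebig : \sum_(m in moves S) (n + 2 * xx T0 (rt S) m.1 + 2 * yy T0 (rt S) m.1 m.2) =
    \sum_(p | (rt S p.1 == p.1) && gd T0 (rt S) p.1 p.2)
      (n + 2 * xx T0 (rt S) p.1 + 2 * yy T0 (rt S) p.1 p.2).
  by apply: eq_bigl => m; rewrite inE.
rewrite -Ebig in K'.
rewrite !mult_INR in K' S2'.
have cpos : (0 < c)%R by rewrite /c; apply: Rmult_lt_0_compat; [apply: Rmult_lt_0_compat | apply: Rinv_0_lt_compat].
have := Rmult_le_compat_l _ _ _ (Rlt_le _ _ cpos) K'.
move=> K2.
have fin : (INR k.+1 * (N ^ k.+1 * e) <= INR k.+1 * INR #|O k.+1 S|)%R.
  apply: Rle_trans S2'; apply: Rle_trans S1; apply: Rle_trans K2.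
  rewrite /c; apply: Req_le; rewrite [(N ^ k.+1)%R]/= -/N; field; lra.
apply: Rmult_le_reg_l fin; apply: lt_0_INR; lia.
Qed.

End Real.


Section Fin.
Variable n : nat.
Variable T0 : edge_set n.
Hypothesis fT0 : forest T0.
Local Notation nbb := (nbb T0).
Local Notation valid := (valid T0).

Lemma nbb_irr w : ~~ nbb w w.
Proof.
apply/negP => H; have := fT0.1 _ H; rewrite cards2 eqxx //.
Qed.

Lemma aux6 (a m : nat) : (INR a < (INR m - 1) / INR 6)%R -> 6 * a + 1 < m.
Proof.
move=> hA.
have I6 : INR 6 = 6%R by rewrite /=; lra.
rewrite I6 in hA.
have : (INR (6 * a + 1) < INR m)%R.
  rewrite plus_INR -multE mult_INR I6 /=.
  have h6 : (6 * ((INR m - 1) / 6) = INR m - 1)%R by field.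
  have h60 : (0 < 6)%R by lra.
  have := Rmult_lt_compat_l 6 _ _ h60 hA; rewrite h6; lra.
by move/INR_lt/ltP.
Qed.

Lemma deg4 : 5 <= n -> ~ star_like 6 T0 -> forall w, 4 * dg T0 w <= n.
Proof.
move=> n5 hns w.
have -> : dg T0 w = #|[set z | nbb w z]|.
  rewrite (card_sumI [set z | nbb w z]); apply: eq_bigr => z _; by rewrite inE.
set N := [set z | nbb w z].
case: (set_0Vmem N) => [->|[z0 z0N]]; first by rewrite cards0.
set e := [set w; z0].
have eT : e \in T0 by move: z0N; rewrite inE.
set A := [set f in T0 | (f != e) && ~~ [disjoint e & f]].
have z0w : z0 != w.
  by apply/eqP => E; move: z0N; rewrite inE E => H; move: (nbb_irr w); rewrite H.
have inj : {in N :\ z0 &, injective (fun z => [set w; z])}.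
  move=> z1 z2; rewrite !inE => /andP[_ h1] /andP[_ h2] E.
  have : z1 \in [set w; z2] by rewrite -E !inE eqxx orbT.
  rewrite !inE => /orP[/eqP E1|/eqP //]; subst z1.
  by move: (nbb_irr w); rewrite h1.
have sub : [set [set w; z] | z in N :\ z0] \subset A.
  apply/subsetP => f /imsetP[z]; rewrite !inE => /andP[zz0 zN] ->.
  apply/and3P; split; first exact: zN.
    apply/eqP => E; have : z \in e by rewrite -E !inE eqxx orbT.
    rewrite /e !inE (negbTE zz0) orbF => /eqP Ez; subst z.
    by move: (nbb_irr w); rewrite zN.
  apply/negP => Dj; have := disjointFr Dj (_ : w \in e).
  by rewrite !inE eqxx => /(_ isT).
have cA := subset_leq_card sub; rewrite (card_in_imset inj) in cA.
have hA : (INR #|A| < (INR n - 1) / INR 6)%R.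
  apply: Rnot_le_lt => H; apply: hns; exists e => //.
have h := aux6 hA.
have := cardsD1 z0 N; rewrite z0N add1n => ->.
move: cA h; move: #|A| #|N :\ z0| => a b.
lia.
Qed.

Definition S0 := St (fun v : 'I_n => v) [ffun v => v] (fun _ => 0).

Lemma S0_valid : valid S0.
Proof.
rewrite /valid /S0 /=; split; [|split; [|split; [|split; [|split]]]] => v //; rewrite ?ffunE ?eqxx //.
Qed.

Lemma S0_nroots : nroots S0 = n.
Proof.
rewrite /nroots /S0 /=; rewrite -[RHS]card_ord; apply: eq_card => v; rewrite inE eqxx //.
Qed.

Lemma phi0 : Phi T0 S0 <= 2 * #|T0|.
Proof.
rewrite /Phi /S0 /=.
under eq_bigl => w do rewrite eqxx.
apply: (@leq_trans (\sum_w dg T0 w)).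
  apply: leq_sum => w _; apply: leq_sum => z _; by case: (nbb w z); case: (z != w).
rewrite /dg pair_bigA /=.

rewrite (eq_bigr (fun p : 'I_n * 'I_n => if [set p.1; p.2] \in T0 then 1 else 0)); last first.
  by move=> p _; rewrite /nbb; case: ([set p.1; p.2] \in T0).
rewrite -big_mkcond /=.
rewrite (partition_big (fun p : 'I_n * 'I_n => [set p.1; p.2]) (fun e => e \in T0)) //=.
rewrite mulnC -sum_nat_const; apply: leq_sum => e eT.
have /cards2P[a [b [ab Ee]]] : #|e| == 2 by rewrite fT0.1.
apply: (@leq_trans (\sum_(p in [set (a, b); (b, a)]) 1)); last first.
  by rewrite sum1_card cards2; case: (_ != _).
rewrite [X in _ <= X]big_mkcond [X in X <= _]big_mkcond /=; apply: leq_sum => p _.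
case: ifP => // /andP[_ /eqP E].
have p12 : p.1 != p.2.
  apply/eqP => E12; move: (fT0.1 _ eT); rewrite -E E12 cards2 eqxx //.
rewrite Ee in E; case: (set2_eq p12 E) => [[E1 E2]|[E1 E2]].
  by rewrite !inE; case: p E1 E2 {E p12} => /= ? ? -> ->; rewrite eqxx.
by rewrite !inE; case: p E1 E2 {E p12} => /= ? ? -> ->; rewrite eqxx orbT.
Qed.

Lemma one_root S : valid S -> nroots S = 1 ->
  exists r, (forall v, rt S v = r) /\ (forall v, (par S v == v) = (v == r)).
Proof.
move=> [rtK [parR _]] nS.
have [r Hr] : exists r, [set v | rt S v == v] = [set r] by apply/cards1P/eqP.
have rtr v : rt S v = r.
  have : rt S v \in [set v | rt S v == v] by rewrite inE rtK.
  by rewrite Hr inE => /eqP.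
exists r; split => // v; rewrite parR rtr eq_sym //.
Qed.

Lemma tree_of S : valid S -> nroots S = 1 ->
  spanning_tree (EdgesOf (par S)) /\ [disjoint EdgesOf (par S) & T0].
Proof.
move=> vS nS; have [r [rtr parr]] := one_root vS nS.
have [rtK [parR [rtP [hP [cP gP]]]]] := vS.
split; first split; first split.
- by move=> e /EdgesP[v pv ->]; rewrite cards2 eq_sym pv.
- exact: (nocycle hP).
- move=> x y; apply: (connect_trans (y := r)); first by rewrite -(rtr x).
  by rewrite connect_symF -(rtr y).
- rewrite disjoint_subset; apply/subsetP => e /EdgesP[v pv ->].
  by rewrite inE /=; apply: gP.
Qed.

Lemma uniq_par S1 S2 r : valid S1 -> valid S2 ->
  (forall v, (par S1 v == v) = (v == r)) -> (forall v, (par S2 v == v) = (v == r)) ->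
  EdgesOf (par S1) = EdgesOf (par S2) -> par S1 = par S2.
Proof.
move=> [_ [_ [_ [hP _]]]] _ p1 p2 EE.
suff H : forall m x, hh S1 x < m -> par S1 x = par S2 x.
  by apply/ffunP => x; apply: (H (hh S1 x).+1).
elim=> [//|m IH] x hx.
case: (eqVneq (par S1 x) (par S2 x)) => // Hne; exfalso.
have xr : x != r.
  apply/eqP => E; subst x; move: Hne; have := p1 r; have := p2 r; rewrite eqxx.
  by move=> /eqP -> /eqP ->; rewrite eqxx.
set y := par S1 x.
have yx : y != x by rewrite /y p1.
have hy : hh S1 y < hh S1 x by apply: hP; rewrite p1.
have e1 : [set x; y] \in EdgesOf (par S1) by apply/EdgesP; exists x; rewrite ?p1.
rewrite EE in e1; case/EdgesP: e1 => z pz E.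
have xy : x != y by rewrite eq_sym.
case: (set2_eq xy E) => [[E1 E2]|[E1 E2]].
  by subst z; move: Hne; rewrite -E2 eqxx.
subst z.
have IHy : par S1 y = par S2 y by apply: IH; lia.
have py : par S1 y = x by rewrite IHy E1.
have py' : par S1 y != y by rewrite py.
have := hP _ py'; rewrite py; lia.
Qed.

End Fin.


Lemma rootofE n (v0 : 'I_n) (P : {ffun 'I_n -> 'I_n}) r :
  (forall v, (P v == v) = (v == r)) -> odflt v0 [pick x | P x == x] = r.
Proof.
move=> H; case: pickP => [x|/(_ r)] /=; first by rewrite H => /eqP.
by rewrite H eqxx.
Qed.

Theorem lemma3p5 (n : nat) (T0 : edge_set n) :
  5 <= n -> forest T0 -> ~ star_like 6 T0 ->
  exists S : {set edge_set n},
    (forall T, T \in S -> spanning_tree T /\ [disjoint T & T0]) /\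
    (exp (-4) * INR n ^ (n - 2) <= INR #|S|)%R.
Proof.
move=> n5 fT0 hns.
have n0 : 0 < n by lia.
pose v0 := Ordinal n0.
pose D := n %/ 4.
have hD w : dg T0 w <= D by rewrite /D leq_divRL // mulnC; exact: deg4.
have h4 : 4 * D <= n by rewrite /D mulnC; exact: leq_trunc_div.
have nS0 : nroots (S0 n) = (n - 1).+1 by rewrite S0_nroots; lia.
have vS0 := S0_valid T0.
have M := mainR hD h4 n0 vS0 nS0.
set OU := O T0 (n - 1) (S0 n) in M.
pose rootof (P : {ffun 'I_n -> 'I_n}) := odflt v0 [pick r | P r == r].
exists [set EdgesOf P | P in OU]; split.
  move=> T /imsetP[P PO ->].
  have [S' [vS' pS' nS' _ _]] := final vS0 nS0 PO.
  by rewrite -pS'; exact: tree_of.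
have card1 : #|OU| <= #|[set EdgesOf P | P in OU]| * n.
  pose f P := (EdgesOf P, rootof P).
  have inj : {in OU &, injective f}.
    move=> P1 P2 H1 H2 [E12 R12].
    have [S1 [vS1 pS1 nS1 _ _]] := final vS0 nS0 H1.
    have [S2 [vS2 pS2 nS2 _ _]] := final vS0 nS0 H2.
    have [r1 [_ p1]] := one_root vS1 nS1.
    have [r2 [_ p2]] := one_root vS2 nS2.
    have e1 : rootof P1 = r1 by apply: rootofE; rewrite -pS1.
    have e2 : rootof P2 = r2 by apply: rootofE; rewrite -pS2.
    move: R12; rewrite e1 e2 => R12; rewrite -R12 in p2.
    rewrite -pS1 -pS2; apply: (uniq_par vS1 vS2 p1 p2).
    by rewrite pS1 pS2.
  rewrite -(card_in_imset inj) -[X in _ * X]card_ord -cardsT -cardsX.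
  apply: subset_leq_card; apply/subsetP => x /imsetP[P PO ->].
  by rewrite inE /= inE andbT; apply: imset_f.
have phi := phi0 fT0.
have fc := forest_card fT0 n0.
have hphi : (2 * INR (Phi T0 (S0 n)) / INR n <= 4)%R.
  have N0 : (0 < INR n)%R by apply: lt_0_INR; apply/ltP.
  have : (INR (Phi T0 (S0 n)) <= 2 * INR n)%R.
    have : Phi T0 (S0 n) <= 2 * n by lia.
    move/leINR; rewrite -multE mult_INR /=; lra.
  move=> h; apply: (Rmult_le_reg_l (INR n)) => //.
  have -> : (INR n * (2 * INR (Phi T0 (S0 n)) / INR n) = 2 * INR (Phi T0 (S0 n)))%R.
    by field; lra.
  lra.
have he : (exp (-4) <= exp (- (2 * INR (Phi T0 (S0 n)) / INR n)))%R.
  apply: exp_le; lra.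
have N0 : (0 < INR n)%R by apply: lt_0_INR; apply/ltP.
have c1 := leINR card1; rewrite -multE mult_INR in c1.
have En : n - 1 = (n - 2).+1 by lia.
rewrite En /= in M.
have Np : (0 < INR n ^ (n - 2))%R by apply: pow_lt.
apply: (Rmult_le_reg_l (INR n)) => //.
apply: Rle_trans (_ : INR n * INR n ^ (n - 2) * exp (- (2 * INR (Phi T0 (S0 n)) / INR n)) <= _)%R.
  have := Rmult_le_compat_l _ _ _ (Rlt_le _ _ (Rmult_lt_0_compat _ _ N0 Np)) he.
  lra.
apply: Rle_trans M _; rewrite Rmult_comm; exact: c1.
Qed.
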